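(* Let $q$ be a prime power, $m\ge1$, and let $\mathrm{Tr}:\mathrm{GF}(q^m)\to\mathrm{GF}(q)$, $\mathrm{Tr}(a)=a+a^q+\cdots+a^{q^{m-1}}$, be the trace map. Let $a_0,a_1,\ldots,a_{q-1}\in\mathrm{GF}(q^m)$. Then $\mathrm{Tr}(a_0+\lambda a_1+\lambda^2a_2+\cdots+\lambda^{q-1}a_{q-1})=0$ for all $\lambda\in\mathrm{GF}(q^m)$ if and only if $\mathrm{Tr}(a_0)=0$ and $a_1=a_2=\cdots=a_{q-1}=0$. *)

(* Defs.v *)
From mathcomp Require Import all_boot all_algebra all_field.
Set Implicit Arguments. Unset Strict Implicit. Unset Printing Implicit Defensive.
Import GRing.Theory.
Local Open Scope ring_scope.

(* The trace GF(q^m) -> GF(q): Tr(a) = a + a^q + ... + a^(q^(m-1)),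
   computed inside L = GF(q^m) (its values lie in the subfield GF(q)). *)
Definition Tr (L : finFieldType) (q m : nat) (a : L) : L :=
  \sum_(i < m) a ^+ (q ^ i)%N.

(* Main.v *)
Require Import Defs.
From mathcomp Require Import all_boot all_algebra all_field.
Local Open Scope ring_scope.
Import GRing.Theory.

Lemma uniq_rep (q i i' j j' : nat) : (0 < i < q)%N -> (0 < i' < q)%N ->
  (i * q ^ j = i' * q ^ j')%N -> i = i' /\ j = j'.
Proof.
have key : forall i i' j j', (0 < i < q)%N -> (0 < i' < q)%N ->
  (i * q ^ j = i' * q ^ j')%N -> (j < j')%N -> False.
  move=> {}i {}i' {}j {}j' /andP[i0 iq] /andP[i'0 i'q] E ljj.
  have q0 : (0 < q)%N by apply: leq_ltn_trans iq.
  have Ej : (q ^ j' = q ^ (j' - j) * q ^ j)%N by rewrite -expnD subnK // ltnW.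
  move: E; rewrite Ej mulnA => /eqP; rewrite eqn_pmul2r ?expn_gt0 ?q0 // => /eqP E.
  have : (q <= q ^ (j' - j))%N.
    by rewrite -{1}(expn1 q) leq_pexp2l // subn_gt0.
  move=> h; have : (q <= i)%N.
    by rewrite E; apply: leq_trans h _; rewrite leq_pmull.
  by rewrite leqNgt iq.
move=> hi hi' E.
case: (ltngtP j j') => [l|l|l].
- by case: (key _ _ _ _ hi hi' E l).
- by case: (key _ _ _ _ hi' hi (esym E) l).
subst j'; split=> //; apply/eqP; move: E => /eqP.
by rewrite eqn_pmul2r // expn_gt0; case/andP: hi => _ /(leq_ltn_trans _) ->.
Qed.

Lemma frob_sum (L : fieldType) (N : nat) I (r : seq I) (F : I -> L) :
  (0 < N)%N -> (GRing.pchar L).-nat N ->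
  (\sum_(i <- r) F i) ^+ N = \sum_(i <- r) F i ^+ N.
Proof.
move=> N0 hN.
apply: (big_morph (fun x : L => x ^+ N)).
  by move=> x y; rewrite exprDn_pchar.
by rewrite expr0n; case: N N0 {hN}.
Qed.

Theorem lemma2 (L : finFieldType) (q m : nat)
    (hq : exists p k : nat, prime p /\ (0 < k)%N /\ q = (p ^ k)%N)
    (hm : (0 < m)%N) (hL : #|L| = (q ^ m)%N) (a : nat -> L) :
  (forall lam : L, Tr q m (\sum_(i < q) lam ^+ i * a i) = 0) <->
  (Tr q m (a 0%N) = 0 /\ forall i : nat, (0 < i < q)%N -> a i = 0).
Proof.
have [p [k [pp [k0 qE]]]] := hq.
have q0 : (0 < q)%N by rewrite qE expn_gt0 prime_gt0.
have pch : p \in [pchar L].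
  by apply: (@card_finPcharP _ p (k * m)) => //; rewrite hL qE expnM.
have hN : forall j, (0 < q ^ j)%N /\ (GRing.pchar L).-nat (q ^ j)%N.
  move=> j; split; first by rewrite expn_gt0 q0.
  by rewrite qE -expnM pnatX pnatE // pch.
have sum0 : forall lam : L, (\sum_(i < q) lam ^+ i * a i) = a 0%N + 
   \sum_(i < q | i != Ordinal q0) lam ^+ i * a i.
  by move=> lam; rewrite (bigD1 (Ordinal q0)) //= expr0 mul1r.
split; last first.
  move=> [T0 Hi] lam; rewrite sum0 big1 ?addr0 // => i hi.
  rewrite Hi ?mulr0 // ltn_ord andbT lt0n.
  by apply: contra hi => /eqP h; apply/eqP/val_inj.
move=> H; split.
  have := H 0; rewrite sum0 big1 ?addr0 // => i hi.
  rewrite expr0n; case: eqP => [h|]; last by rewrite mul0r.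
  by case/eqP: hi; apply/val_inj.
move=> i /andP[i0 iq].
pose P : {poly L} := \sum_(x : 'I_m * 'I_q) (a x.2 ^+ (q ^ x.1)) *: 'X^(x.2 * q ^ x.1).
have Pev : forall lam, P.[lam] = Tr q m (\sum_(i<q) lam^+i * a i).
  move=> lam; rewrite /Tr horner_sum.
  under [RHS]eq_bigr => j _ do rewrite frob_sum ?(proj1 (hN j)) ?(proj2 (hN j)) //.
  rewrite pair_bigA /=; apply: eq_bigr => x _.
  by rewrite hornerZ hornerXn exprMn exprM mulrC.
have P0 : P = 0.
  apply/eqP; apply: contraT => Pn0.
  have := max_poly_roots Pn0 (rs := enum L).
  rewrite enum_uniq -cardE hL.
  have -> : all (root P) (enum L) by apply/allP => x _; rewrite /root Pev H.
  move=> /(_ isT isT) h; suff hs : (size P <= q ^ m)%N by rewrite leqNgt h in hs.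
  rewrite /P; apply: leq_trans (size_sum _ _ _) _; apply/bigmax_leqP => x _.
  apply: leq_trans (size_scale_leq _ _) _; rewrite size_polyXn.
  apply: leq_trans (_ : (q * q ^ x.1 <= _)%N).
    by rewrite ltn_pmul2r ?(proj1 (hN _)).
  by rewrite -expnS leq_pexp2l.
have := congr1 (fun P : {poly L} => P`_i) P0; rewrite coef0 coef_sumMXn.
rewrite (big_pred1 (Ordinal hm, Ordinal iq)) /= ?expn0 ?expr1 //.
move=> [j x2] /=; apply/eqP/eqP => [E|[-> ->]]; last by rewrite /= expn0 muln1.
have x0 : (0 < x2)%N.
  by rewrite lt0n; apply: contraTneq i0 => h; rewrite -E h.
have [E1 E2] := @uniq_rep q x2 i j 0 ltac:(by rewrite x0 ltn_ord) ltac:(by rewrite i0 iq)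
   ltac:(by rewrite expn0 muln1).
by congr pair; apply/val_inj.
Qed.
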